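(* Let $r\geq 2$ and let $E$ be the set of idempotents of the free inverse monoid $\mathrm{FIM}_r$ of rank $r$. Then the exponential growth rate of the idempotents is \[\limsup_{K\to\infty}|S(K)\cap E|^{1/K}=\lim_{k\to\infty}|S(2k)\cap E|^{1/(2k)}=\left(\frac{2r-1}{2r-2}\right)^{r-1}\sqrt{2r-1}.\] Moreover, the ratio of this growth rate to $\sqrt{e(2r-1)}$ tends to $1$ as $r\to\infty$.
   Context: $\mathrm{FIM}_r$ is the free inverse monoid on a set $X$ with $|X|=r$. It is generated as a monoid by $X\cup X^{-1}$, where $X^{-1}$ is a disjoint copy of $X$ consisting of formal inverses. The length of an element is the minimal length of a word over $X\cup X^{-1}$ representing it. $S(K)$ is the set of elements of length exactly $K$. An idempotent is an element $e$ with $e^2=e$. In Munn's model these are exactly the pairs $(T,1)$, and $S(K)\cap E$ is empty when $K$ is odd. *)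

(* Defs.v *)
From HB Require Import structures.
From mathcomp Require Import all_boot all_order all_algebra.
From mathcomp Require Import all_classical all_reals all_analysis.
Set Implicit Arguments. Unset Strict Implicit. Unset Printing Implicit Defensive.

(** Free inverse monoid FIM_r, presented through Munn's model.
    Alphabet X ∪ X^{-1}: a letter is (i, b) with i : 'I_r, b = false for x_i,
    b = true for the formal inverse x_i^{-1}. *)
Definition letter (r : nat) : finType := ('I_r * bool)%type.
Definition word (r : nat) := seq (letter r).

Definition linv r (a : letter r) : letter r := (a.1, ~~ a.2).

(** Free reduction (stack based; the reduced word is stored reversed,
    which is a canonical representative of the free-group element). *)
Fixpoint redacc r (acc : word r) (w : word r) : word r :=
  match w with
  | [::] => acc
  | a :: w' =>
      redacc (match acc with
              | b :: acc' => if b == linv a then acc' else a :: acc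
              | [::] => [:: a]
              end) w'
  end.
Definition red r (w : word r) : word r := redacc [::] w.

(** Vertex set of the Munn tree of w: the free-group elements (vertices of
    the Cayley tree of F_r) visited by the prefixes of w.  A connected
    subgraph of a tree is determined by its vertex set. *)
Definition verts r (w : word r) : seq (word r) :=
  [seq red (take n w) | n <- iota 0 (size w).+1].

(** Two words represent the same element of FIM_r iff they have the same
    Munn pair (T, g): same Munn tree and same reduced form. *)
Definition sameM r (u v : word r) : bool :=
  [&& red u == red v, all (mem (verts v)) (verts u) & all (mem (verts u)) (verts v)].

Lemma sameM_refl r (w : word r) : sameM w w.
Proof.
by apply/and3P; split => //; apply/allP.
Qed.

Definition idemw r (w : word r) : bool := sameM (w ++ w) w.

Definition reprP r (w : word r) : pred nat :=
  fun n => [exists t : n.-tuple (letter r), sameM (tval t) w].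

Lemma reprP_ex r (w : word r) : exists n, reprP w n.
Proof.
exists (size w); apply/existsP; exists (in_tuple w); exact: sameM_refl.
Qed.

Definition elen r (w : word r) : nat := ex_minn (reprP_ex w).

Fixpoint classes r (l : seq (word r)) : seq (word r) :=
  match l with
  | [::] => [::]
  | w :: l' => let c := classes l' in if has (sameM w) c then c else w :: c
  end.

(** |S(K) ∩ E| : number of idempotent elements of FIM_r of length exactly K.
    Every element of length K is represented by a word of length K, so these
    elements are the classes of words t of size K that are idempotent and
    whose element has length K. *)
Definition SE (r K : nat) : nat :=
  size (classes
    [seq tval t | t <- enum [pred t : K.-tuple (letter r) |
                                idemw (tval t) && (elen (tval t) == K)]]).

(* Main.v *)
Require Import Defs.
From HB Require Import structures.
From mathcomp Require Import all_boot all_order all_algebra.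
From mathcomp Require Import all_classical all_reals all_analysis.
From mathcomp Require Import zify ring lra.
Set Implicit Arguments. Unset Strict Implicit. Unset Printing Implicit Defensive.

Section FG.
Variable r : nat.
Local Notation L := (letter r).
Local Notation W := (word r).

Definition step (acc : W) (a : L) : W :=
  if acc is b :: acc' then (if b == linv a then acc' else a :: acc) else [:: a].

Lemma redacc_cons (acc : W) a w : redacc acc (a :: w) = redacc (step acc a) w.
Proof. by []. Qed.

Lemma redacc_cat (acc u v : W) : redacc acc (u ++ v) = redacc (redacc acc u) v.
Proof. by elim: u acc => //= a u IH acc; rewrite IH. Qed.

Lemma linvK : involutive (@linv r).
Proof. by case=> i b; rewrite /linv /= negbK. Qed.

Definition allowed (p : W) (a : L) : bool := if p is b :: _ then b != linv a else true.

Fixpoint reduced (w : W) : bool :=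
  if w is a :: p then allowed p a && reduced p else true.

Lemma stepE p a : step p a = if allowed p a then a :: p else behead p.
Proof. by case: p => //= b p; case: (b == linv a). Qed.

Lemma reduced_step p a : reduced p -> reduced (step p a).
Proof.
rewrite stepE; case: ifP => /= [-> -> //|_]; by case: p => //= b p /andP[].
Qed.

Lemma reduced_redacc p w : reduced p -> reduced (redacc p w).
Proof. by elim: w p => //= a w IH p rp; apply: IH; apply: reduced_step. Qed.

Lemma step_inv p a : reduced p -> step (step p a) (linv a) = p.
Proof.
rewrite (stepE p a); case: ifP => Hal.
  by rewrite /step linvK eqxx.
case: p Hal => //= b p /negbFE/eqP -> /andP[Ha _].
rewrite stepE; case: p Ha => //= c p Ha.
by rewrite /= ifT.
Qed.

Definition winv (w : W) : W := rev (map (@linv r) w).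

Lemma redacc_inv p w : reduced p -> redacc (redacc p w) (winv w) = p.
Proof.
elim: w p => //= a w IH p rp.
rewrite /winv map_cons rev_cons -cats1 redacc_cat -/(winv w) IH ?reduced_step //=.
exact: step_inv.
Qed.

Lemma red_cat (u v : W) : red (u ++ v) = redacc (red u) v.
Proof. by rewrite /red redacc_cat. Qed.

Lemma reduced_red (w : W) : reduced (red w).
Proof. exact: reduced_redacc. Qed.

Lemma redacc_inj (p q w : W) : reduced p -> reduced q -> redacc p w = redacc q w -> p = q.
Proof.
by move=> rp rq e; rewrite -(redacc_inv w rp) -(redacc_inv w rq) e.
Qed.

Fixpoint vertsFrom (p : W) (w : W) : seq W :=
  if w is a :: w' then p :: vertsFrom (step p a) w' else [:: p].

Lemma vertsFromE p (w : W) :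
  [seq redacc p (take n w) | n <- iota 0 (size w).+1] = vertsFrom p w.
Proof.
elim: w p => [|a w IH] p; first by [].
have -> : iota 0 (size (a :: w)).+1 = 0 :: map (addn 1) (iota 0 (size w).+1) by rewrite /= -iotaDl.
rewrite map_cons -map_comp /= -IH; congr cons.
Qed.

Lemma vertsE (w : W) : verts w = vertsFrom [::] w.
Proof. by rewrite /verts /red vertsFromE. Qed.

Lemma vertsFrom_head p w : vertsFrom p w = p :: behead (vertsFrom p w).
Proof. by case: w. Qed.

Lemma mem_vertsFrom_head p w : p \in vertsFrom p w.
Proof. by rewrite vertsFrom_head inE eqxx. Qed.

Lemma vertsFrom_cat p u v :
  vertsFrom p (u ++ v) = vertsFrom p u ++ behead (vertsFrom (redacc p u) v).
Proof.
elim: u p => [|a u IH] p /=; first by rewrite -vertsFrom_head.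
by rewrite IH.
Qed.

Lemma vertsFrom_rcons p w a :
  vertsFrom p (rcons w a) = rcons (vertsFrom p w) (redacc p (rcons w a)).
Proof.
by rewrite -cats1 vertsFrom_cat /= cats1 redacc_cat.
Qed.

Lemma last_vertsFrom x p w : last x (vertsFrom p w) = redacc p w.
Proof. by elim: w x p => //= a w IH x p; rewrite IH. Qed.

Lemma mem_last_vertsFrom p w : redacc p w \in vertsFrom p w.
Proof.
have := mem_last p (behead (vertsFrom p w)).
rewrite -vertsFrom_head.
have -> : last p (behead (vertsFrom p w)) = last p (vertsFrom p w) by case: w.
by rewrite last_vertsFrom.
Qed.

Lemma suffix_cons2 (s t : W) (x : L) : suffix s (x :: t) = (s == x :: t) || suffix s t.
Proof.
apply/idP/idP.
  move/suffixP=> [s2 e]; case: s2 e => [|y s2] /= e; first by rewrite e eqxx.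
  by case: e => _ ->; rewrite suffix_suffix orbT.
case/orP => [/eqP -> | H]; first exact: suffix_refl.
exact: suffix_trans H (suffix_cons t x).
Qed.

Lemma vertsFrom_closed p w x : x \in vertsFrom p w ->
  (behead x \in vertsFrom p w) || suffix x p.
Proof.
elim: w p => [|a w IH] p /=.
  by rewrite inE => /eqP ->; rewrite suffix_refl orbT.
rewrite inE => /orP [/eqP -> | H]; first by rewrite suffix_refl orbT.
case/orP: (IH _ H) => [H1 | H1]; first by rewrite inE H1 orbT.
move: H1; rewrite stepE; case: ifP => _.
  rewrite suffix_cons2 => /orP [/eqP Ex | ->]; last by rewrite orbT.
  by rewrite Ex /= inE eqxx.
move=> H1; apply/orP; right; apply: suffix_trans H1 _.
by case: (p) => //= b q; apply: suffix_cons.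
Qed.

Lemma verts_closed w x : x \in vertsFrom [::] w -> behead x \in vertsFrom [::] w.
Proof.
move=> H; case/orP: (vertsFrom_closed H) => // ; rewrite suffixs0 => /eqP ->.
exact: mem_vertsFrom_head.
Qed.

Lemma vertsFrom_reduced p w x : reduced p -> x \in vertsFrom p w -> reduced x.
Proof.
elim: w p => [|a w IH] p rp /=; first by rewrite inE => /eqP ->.
rewrite inE => /orP [/eqP -> // | H]; exact: IH (reduced_step _ rp) H.
Qed.

Lemma size_undup_eq (s t : seq W) : s =i t -> size (undup s) = size (undup t).
Proof. by move=> e; apply: perm_size; apply: perm_undup. Qed.

Lemma undup_rcons_new (s : seq W) x : x \notin s -> undup (rcons s x) = rcons (undup s) x.
Proof.
elim: s => [|y s IH] //= ; rewrite inE negb_or => /andP [nxy nxs].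
rewrite mem_rcons inE eq_sym (negbTE nxy) /=; case: ifP => _; by rewrite IH.
Qed.

Lemma size_step p a : (size (step p a) + 1 >= size p)%N.
Proof. rewrite stepE; case: ifP => _ /=; case: p => //= *; lia. Qed.

Lemma verts_len (w : W) :
  (2 * size (undup (vertsFrom [::] w)) <= size w + size (red w) + 2)%N.
Proof.
elim/last_ind: w => [|w a IH] //.
have E : red (rcons w a) = step (red w) a by rewrite -cats1 red_cat.
rewrite vertsFrom_rcons; change (redacc [::] (rcons w a)) with (red (rcons w a)).
rewrite E size_rcons.
set q := red w in IH *.
case: (boolP (step q a \in vertsFrom [::] w)) => Hin.
  have -> : size (undup (rcons (vertsFrom [::] w) (step q a))) = size (undup (vertsFrom [::] w)).
    apply: size_undup_eq => x; rewrite mem_rcons inE; case: eqP => // ->; by rewrite Hin.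
  have := size_step q a; lia.
rewrite undup_rcons_new // size_rcons.
have Hal : allowed q a.
  apply: contraNT Hin => Hna; rewrite stepE (negbTE Hna).
  exact: verts_closed (mem_last_vertsFrom _ _).
move: IH; rewrite stepE Hal /=; lia.
Qed.

End FG.

Section FG2.
Variable r : nat.
Local Notation L := (letter r).
Local Notation W := (word r).


Lemma sameM_trans (u v w : W) : sameM u v -> sameM v w -> sameM u w.
Proof.
move=> /and3P [/eqP e1 /allP a1 /allP b1] /and3P [/eqP e2 /allP a2 /allP b2].
apply/and3P; split; first by rewrite e1 e2.
  by apply/allP => x /a1 /a2.
by apply/allP => x /b2 /b1.
Qed.

Lemma sameME (u v : W) : sameM u v -> red u = red v /\ verts u =i verts v.
Proof.
move=> /and3P [/eqP e1 /allP a1 /allP b1]; split => // x.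
by apply/idP/idP => [/a1 | /b1].
Qed.

Lemma sameMI (u v : W) : red u = red v -> verts u =i verts v -> sameM u v.
Proof.
move=> e1 e2; apply/and3P; split; first by rewrite e1.
  by apply/allP => x Hx; rewrite inE -e2.
by apply/allP => x Hx; rewrite inE e2.
Qed.

Lemma sameM_sym (u v : W) : sameM u v = sameM v u.
Proof.
by apply/idP/idP => /sameME [e1 e2]; apply: sameMI => // x; apply/esym/e2.
Qed.

Lemma idemwE (w : W) : idemw w = (red w == [::]).
Proof.
apply/idP/idP.
  move=> /and3P [/eqP e _ _]; move: e; rewrite red_cat => e.
  apply/eqP; apply: (@redacc_inj r _ _ w) => //; first exact: reduced_red.
move=> /eqP e; apply: sameMI; first by rewrite red_cat e.
move=> x; rewrite !vertsE vertsFrom_cat mem_cat.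
change (redacc [::] w) with (red w); rewrite e.
by case: (boolP (x \in vertsFrom [::] w)) => //= H; apply/negP => /mem_behead; rewrite (negbTE H).
Qed.

End FG2.

Section Stack.
Variable r : nat.
Local Notation L := (letter r).
Local Notation W := (word r).
Definition item := (bool * (L * W))%type.
Definition slots (v : W) : seq item :=
  [seq (true, (c, v)) | c <- [seq c <- enum L | allowed v c]].
Definition clos (a : L) : item := (false, (a, [::])).

Fixpoint gen (k : nat) (st : seq item) {struct k} : seq W :=
  let fix g (st : seq item) : seq W :=
    match st with
    | [::] => if k is 0 then [:: [::]] else [::]
    | (true, (b, q)) :: st' =>
        g st' ++ (if k is k'.+1 then map (cons b) (gen k' (slots (b :: q) ++ clos b :: st')) else [::])
    | (false, (a, _)) :: st' => map (cons (linv a)) (g st')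
    end in g st.

Lemma gen_nil k : gen k [::] = if k is 0 then [:: [::]] else [::].
Proof. by case: k. Qed.
Lemma gen_slot k b q st : gen k ((true, (b, q)) :: st) =
  gen k st ++ (if k is k'.+1 then map (cons b) (gen k' (slots (b :: q) ++ clos b :: st)) else [::]).
Proof. by case: k. Qed.
Lemma gen_clos k a z st : gen k ((false, (a, z)) :: st) = map (cons (linv a)) (gen k st).
Proof. by case: k. Qed.

Fixpoint fc (m k s : nat) {struct k} : nat :=
  let fix g s := match s with
    | 0 => nat_of_bool (k == 0)
    | s'.+1 => g s' + (if k is k'.+1 then fc m k' (s' + m) else 0) end in g s.

Lemma fc0 m k : fc m k 0 = (k == 0). Proof. by case: k. Qed.
Lemma fcS m k s : fc m k s.+1 = fc m k s + (if k is k'.+1 then fc m k' (s + m) else 0).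
Proof. by case: k. Qed.

Definition nslots (st : seq item) := count (fun it : item => it.1) st.

Lemma card_letter : #|L| = (2 * r)%N.
Proof. by rewrite /letter card_prod card_ord card_bool mulnC. Qed.

Lemma size_slots a q : size (slots (a :: q)) = (2 * r - 1)%N.
Proof.
rewrite /slots size_map size_filter /=.
have H1 : count (fun c => a == linv c) (enum L) = 1%N.
  rewrite (eq_count (a2 := pred1 (linv a))); last first.
    by move=> c /=; apply/eqP/eqP => [->|->]; rewrite linvK.
  by rewrite count_uniq_mem ?enum_uniq // mem_enum.
have := count_predC (fun c => a == linv c) (enum L).
rewrite H1 -cardE card_letter.
have -> : count (predC (fun c => a == linv c)) (enum L) = count (fun c => a != linv c) (enum L) by [].
lia.
Qed.

Lemma nslots_slot x st : nslots ((true, x) :: st) = (nslots st).+1.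
Proof. by []. Qed.
Lemma nslots_clos x st : nslots ((false, x) :: st) = nslots st.
Proof. by []. Qed.
Lemma nslots_cat s t : nslots (s ++ t) = (nslots s + nslots t)%N.
Proof. by rewrite /nslots count_cat. Qed.
Lemma nslots_slots v : nslots (slots v) = size (slots v).
Proof. by rewrite /nslots /slots count_map size_map; apply/eqP; rewrite -all_count; apply/allP. Qed.

Lemma size_gen k st : size (gen k st) = fc (2 * r - 1) k (nslots st).
Proof.
elim: k st => [|k IHk] st; elim: st => [|[[] [b q]] st IH] //.
- by rewrite gen_slot cats0 IH nslots_slot fcS; apply: esym; apply: addn0.
- by rewrite gen_clos size_map IH nslots_clos.
- rewrite gen_slot size_cat IH size_map IHk nslots_cat nslots_slots size_slots nslots_slot fcS.
  by rewrite nslots_clos [(2 * r - 1 + _)%N]addnC.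
- by rewrite gen_clos size_map IH nslots_clos.
Qed.


Definition Av (st : seq item) : seq W := [seq it.2.1 :: it.2.2 | it <- st & it.1].
Definition ncl (st : seq item) := count (fun it : item => ~~ it.1) st.

Lemma Av_cat s t : Av (s ++ t) = Av s ++ Av t.
Proof. by rewrite /Av filter_cat map_cat. Qed.

Lemma mem_Av w st : w \in Av st -> exists c q, w = c :: q /\ (true, (c, q)) \in st.
Proof.
case/mapP => [[[] [c q]]]; rewrite mem_filter /= => Hin ->; last by [].
by exists c, q.
Qed.

Lemma mem_Av_slots v u : u \in Av (slots v) -> exists c, u = c :: v /\ allowed v c.
Proof.
case/mem_Av => c [q [-> /mapP [c' Hc' [-> ->]]]].
by exists c'; move: Hc'; rewrite mem_filter => /andP [].
Qed.

Lemma Av_slots_mem v c : allowed v c -> c :: v \in Av (slots v).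
Proof.
move=> Ha; apply/mapP; exists (true, (c, v)) => //.
rewrite mem_filter /=; apply/mapP; exists c => //.
by rewrite mem_filter Ha mem_enum.
Qed.

Lemma Av_cons_slot b q st : Av ((true, (b, q)) :: st) = (b :: q) :: Av st.
Proof. by []. Qed.
Lemma Av_cons_clos x st : Av ((false, x) :: st) = Av st.
Proof. by []. Qed.

Lemma ncl_slots v : ncl (slots v) = 0%N.
Proof. by rewrite /ncl /slots count_map; apply/eqP; rewrite -leqn0 leqNgt -has_count; apply/hasP => -[]. Qed.

Fixpoint valid (p : W) (st : seq item) : bool :=
  match st with
  | [::] => p == [::]
  | (true, (b, q)) :: st' => [&& q == p, allowed p b, (true, (b, q)) \notin st' & valid p st']
  | (false, (a, _)) :: st' =>
      [&& p == a :: behead p, (true, (a, behead p)) \notin st' & valid (behead p) st']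
  end.

Lemma suffix_size_eq (s t : W) : suffix s t -> size t <= size s -> s = t.
Proof.
move=> /suffixP [s2 ->]; case: s2 => [|x s2] //=; rewrite size_cat; lia.
Qed.

Lemma nsuffix_long (s t : W) : size t < size s -> ~~ suffix s t.
Proof. by move=> H; apply/negP => /size_suffix; rewrite leqNgt H. Qed.

Lemma valid_par p st c q : valid p st -> (true, (c, q)) \in st -> suffix q p.
Proof.
elim: st p => [|[[] [b q']] st IH] p //=.
  case/and4P => /eqP -> _ _ V; rewrite inE => /orP [/eqP [_ ->] | H].
    exact: suffix_refl.
  exact: IH V H.
case/and3P => /eqP E _ V; rewrite inE /= => H.
apply: suffix_trans (IH _ V H) _; rewrite E; exact: suffix_cons.
Qed.

Lemma valid_nanc p st c q : valid p st -> (true, (c, q)) \in st -> ~~ suffix (c :: q) p.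
Proof.
elim: st p => [|[[] [b q']] st IH] p //=.
  case/and4P => /eqP -> _ _ V; rewrite inE => /orP [/eqP [_ ->] | H].
    by apply: nsuffix_long.
  exact: IH V H.
case/and3P => /eqP E N V; rewrite inE /= => H.
rewrite E suffix_cons2 negb_or (IH _ V H) andbT.
by apply/negP => /eqP [e1 e2]; move: N; rewrite -e1 -e2 H.
Qed.

Lemma valid_slots_cat v cs st : uniq cs -> all (allowed v) cs ->
  (forall c, (true, (c, v)) \notin st) -> valid v st ->
  valid v ([seq (true, (c, v)) | c <- cs] ++ st).
Proof.
elim: cs => [|c cs IH] //= /andP [nc U] /andP [Ac A] N V.
rewrite eqxx Ac IH // andbT mem_cat negb_or N andbT.
by apply/mapP => -[c' Hc' [E]]; move: nc; rewrite E Hc'.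
Qed.

Lemma valid_open p b st : valid p ((true, (b, p)) :: st) ->
  valid (b :: p) (slots (b :: p) ++ clos b :: st).
Proof.
case/and4P => _ Ab N V.
apply: valid_slots_cat.
- by apply: filter_uniq; apply: enum_uniq.
- by apply: filter_all.
- move=> c; rewrite inE /= ; apply/negP => H.
  have := valid_par V H; apply/negP; apply: nsuffix_long => /=; lia.
- by apply/and3P; split => //=.
Qed.

Lemma step_clos p (a : L) : p = a :: behead p -> step p (linv a) = behead p.
Proof. by move=> E; rewrite stepE E /= (linvK a) eqxx. Qed.

Lemma step_open p (b : L) : allowed p b -> step p b = b :: p.
Proof. by move=> H; rewrite stepE H. Qed.

Definition inR (p : W) (st : seq item) (z : W) :=
  suffix z p || has (fun w => suffix w z) (Av st).


Lemma vertsFrom_cons (p : W) a w : vertsFrom p (a :: w) = p :: vertsFrom (step p a) w.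
Proof. by []. Qed.

Lemma ncl_slot x st : ncl ((true, x) :: st) = ncl st.
Proof. by []. Qed.
Lemma ncl_clos x st : ncl ((false, x) :: st) = (ncl st).+1.
Proof. by []. Qed.
Lemma ncl_cat s t : ncl (s ++ t) = (ncl s + ncl t)%N.
Proof. by rewrite /ncl count_cat. Qed.

Definition Cprop k := forall st p x, valid p st -> x \in gen k st ->
  [/\ redacc p x = [::], size x = (2 * k + ncl st)%N,
      (forall z, z \in vertsFrom p x -> inR p st z),
      (forall z, suffix z p -> z \in vertsFrom p x) &
      size (undup (vertsFrom p x)) = (size p + 1 + k)%N].

Lemma genC_aux k : (forall k', k = k'.+1 -> Cprop k') -> Cprop k.
Proof.
move=> IHk st; elim: st => [|[[] [b q]] st IH] p x.
- rewrite gen_nil /= => /eqP ->; case: k IHk => [|k] _ //; rewrite inE => /eqP ->.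
  split => //= z.
    by rewrite inE => /eqP ->; rewrite /inR suffix_refl.
  by rewrite suffixs0 => /eqP ->; rewrite inE.
- move=> VV; move: (VV) => /and4P [/eqP Eq Ab N V]; rewrite gen_slot mem_cat => /orP [H | H].
  + have [E1 E2 R P S] := IH _ _ V H; split => //.
    move=> z /R; rewrite /inR Av_cons_slot /= => /orP [-> // | ->]; by rewrite !orbT.
  + subst q.
    clear IH; case: k IHk H => [|k] IHk //; case/mapP => y Hy ->.
    have V' := valid_open VV.
    have [E1 E2 R P S] := IHk k erefl _ _ _ V' Hy.
    have Es : step p b = b :: p := step_open Ab.
    split.
    * by rewrite redacc_cons Es.
    * rewrite ncl_slot; rewrite [size _]/= E2 ncl_cat ncl_slots ncl_clos; lia.
    * move=> z; rewrite vertsFrom_cons inE Es => /orP [/eqP -> | /R].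
        by rewrite /inR suffix_refl.
      rewrite /inR Av_cat Av_cons_clos has_cat suffix_cons2 Av_cons_slot /=.
      case/orP => [/orP [/eqP -> | ->] | /orP [/hasP [w /mem_Av_slots [c [-> _]] Hw] | ->]].
      -- by rewrite suffix_refl !orbT.
      -- by [].
      -- by rewrite (suffix_trans (suffix_cons _ _) Hw) orbT.
      -- by rewrite !orbT.
    * move=> z Hz; rewrite vertsFrom_cons inE Es; apply/orP; right; apply: P.
      exact: suffix_trans Hz (suffix_cons _ _).
    * rewrite vertsFrom_cons Es /= ifT ?S /=; first lia.
      apply: P; exact: suffix_cons.
- case: p => [|a' p'] //= /and3P [/eqP [Ea] N V]; subst a'.
  rewrite gen_clos => /mapP [y Hy ->].
  have [E1 E2 R P S] := IH _ _ V Hy.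
  have Es : step (b :: p') (linv b) = p' by apply: step_clos.
  have Hnp : (b :: p') \notin vertsFrom p' y.
    apply/negP => /R; rewrite /inR; case/orP.
      by apply/negP; apply: nsuffix_long => /=.
    case/hasP => w /mem_Av [c [q' [-> Hin]]] Hs.
    move: Hs; rewrite suffix_cons2 => /orP [/eqP [e1 e2] | Hs].
      by move: N; rewrite -e1 -e2 Hin.
    by move: (valid_nanc V Hin); rewrite Hs.
  split.
  * by rewrite redacc_cons Es.
  * rewrite [size _]/= E2; lia.
  * move=> z; rewrite vertsFrom_cons inE Es => /orP [/eqP -> | /R]; first by rewrite /inR suffix_refl.
    rewrite /inR Av_cons_clos => /orP [H | ->]; last by rewrite orbT.
    by rewrite (suffix_trans H (suffix_cons _ _)).
  * move=> z; rewrite suffix_cons2 vertsFrom_cons inE Es => /orP [-> // | /P ->]; by rewrite orbT.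
  * by rewrite vertsFrom_cons Es /= (negbTE Hnp) /= S /=; lia.
Qed.

Lemma genC k : Cprop k.
Proof.
elim: k => [|k IH]; apply: genC_aux => // k' [<-] //.
Qed.


Lemma slot_notin k p b st x : valid p ((true, (b, p)) :: st) -> x \in gen k st ->
  (b :: p) \notin vertsFrom p x.
Proof.
case/and4P => _ _ N V Hx; have [_ _ R _ _] := genC V Hx.
apply/negP => /R; rewrite /inR; case/orP.
  by apply/negP; apply: nsuffix_long => /=.
case/hasP => w /mem_Av [c [q' [-> Hin]]] Hs.
move: Hs; rewrite suffix_cons2 => /orP [/eqP [e1 e2] | Hs].
  by move: N; rewrite -e1 -e2 Hin.
by move: (valid_nanc V Hin); rewrite Hs.
Qed.

Lemma clos_notin k p' b q st y : valid (b :: p') ((false, (b, q)) :: st) -> y \in gen k st ->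
  (b :: p') \notin vertsFrom p' y.
Proof.
rewrite /= => /and3P [_ N V] Hy; have [_ _ R _ _] := genC V Hy.
apply/negP => /R; rewrite /inR; case/orP.
  by apply/negP; apply: nsuffix_long => /=.
case/hasP => w /mem_Av [c [q' [-> Hin]]] Hs.
move: Hs; rewrite suffix_cons2 => /orP [/eqP [e1 e2] | Hs].
  by move: N; rewrite -e1 -e2 Hin.
by move: (valid_nanc V Hin); rewrite Hs.
Qed.

Definition Iprop k := forall st p x1 x2, valid p st -> x1 \in gen k st -> x2 \in gen k st ->
  vertsFrom p x1 =i vertsFrom p x2 -> x1 = x2.

Lemma eq_tail_verts (p : W) (A B : seq W) : p \in A -> p \in B -> p :: A =i p :: B -> A =i B.
Proof.
move=> HA HB E z; have := E z; rewrite !inE.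
by case: (boolP (z == p)) => [/eqP -> | _] //=; rewrite HA HB.
Qed.

Lemma genI_aux k : (forall k', k = k'.+1 -> Iprop k') -> Iprop k.
Proof.
move=> IHk st; elim: st => [|[[] [b q]] st IH] p x1 x2.
- by rewrite gen_nil; case: k IHk => [|k] _ //; rewrite !inE => _ /eqP -> /eqP ->.
- move=> VV; move: (VV) => /and4P [/eqP Eq Ab N V]; subst q.
  rewrite !gen_slot !mem_cat.
  case/orP => [H1 | H1]; case/orP => [H2 | H2] Heq.
  + exact: IH V H1 H2 Heq.
  + clear IH; case: k IHk H1 H2 => [|k] IHk // H1 /mapP [y2 Hy2 E2].
    have := slot_notin VV H1; rewrite Heq E2 vertsFrom_cons step_open // inE.
    by rewrite mem_vertsFrom_head orbT.
  + clear IH; case: k IHk H1 H2 => [|k] IHk // /mapP [y1 Hy1 E1] H2.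
    have := slot_notin VV H2; rewrite -Heq E1 vertsFrom_cons step_open // inE.
    by rewrite mem_vertsFrom_head orbT.
  + clear IH; case: k IHk H1 H2 Heq => [|k] IHk // /mapP [y1 Hy1 ->] /mapP [y2 Hy2 ->].
    rewrite !vertsFrom_cons step_open // => Heq.
    have V' := valid_open VV.
    have [_ _ _ P1 _] := genC V' Hy1; have [_ _ _ P2 _] := genC V' Hy2.
    congr cons; apply: (IHk k erefl _ _ _ _ V' Hy1 Hy2).
    apply: eq_tail_verts Heq; [apply: P1 | apply: P2]; exact: suffix_cons.
- case: p => [|a' p'] // VV; move: (VV) => /= /and3P [/eqP [Ea] N V]; subst a'.
  rewrite !gen_clos => /mapP [y1 Hy1 ->] /mapP [y2 Hy2 ->].
  rewrite !vertsFrom_cons step_clos // => Heq; congr cons.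
  apply: (IH _ _ _ V Hy1 Hy2) => z.
  have := Heq z; rewrite !inE.
  case: (boolP (z == b :: p')) => [/eqP -> | _] //= _.
  by rewrite (negbTE (clos_notin VV Hy1)) (negbTE (clos_notin VV Hy2)).
Qed.

Lemma genI k : Iprop k.
Proof.
elim: k => [|k IH]; apply: genI_aux => // k' [<-] //.
Qed.


Lemma reduced_suffix (s u : W) : reduced u -> suffix s u -> reduced s.
Proof.
move=> ru /suffixP [t E]; subst u; elim: t ru => //= c t IH /andP [_ H]; exact: IH.
Qed.

Lemma suffix_child (v u : W) : suffix v u -> u != v -> exists c, suffix (c :: v) u.
Proof.
move=> /suffixP [t ->]; case/lastP: t => [|t c]; first by rewrite eqxx.
by move=> _; exists c; rewrite cat_rcons; apply: suffix_suffix.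
Qed.

Lemma suffix_behead (v u : W) : suffix v u -> u != v -> suffix v (behead u).
Proof.
move=> /suffixP [t ->]; case: t => [|c t] /=; first by rewrite eqxx.
by move=> _; apply: suffix_suffix.
Qed.

Definition Sprop k := forall st p (D : seq W), valid p st -> uniq D -> size D = k ->
  (forall u, u \in D -> reduced u) ->
  (forall u, u \in D -> (u \in Av st) || (behead u \in D)) ->
  (forall u, u \in D -> has (fun w => suffix w u) (Av st)) ->
  exists2 x, x \in gen k st & (forall z, (z \in vertsFrom p x) = suffix z p || (z \in D)).

Lemma noDesc p b st (D : seq W) : valid p ((true, (b, p)) :: st) -> (b :: p) \notin D ->
  (forall u, u \in D -> (u \in Av ((true, (b, p)) :: st)) || (behead u \in D)) ->
  forall u, u \in D -> ~~ suffix (b :: p) u.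
Proof.
move=> /and4P [_ _ N V] nv Hcl.
suff H : forall n u, size u <= n -> u \in D -> ~~ suffix (b :: p) u.
  by move=> u; apply: H (leqnn _).
elim=> [|n IH] u Hs Hu; apply/negP => Hsuf.
  by move: (size_suffix Hsuf) Hs => /=; case: (size u).
have Hne : u != b :: p by apply: contraNneq nv => <-.
case/orP: (Hcl u Hu) => [|Hb].
  rewrite Av_cons_slot inE (negbTE Hne) /= => /mem_Av [c [q [Eu Hin]]].
  have Hq := valid_par V Hin.
  have Ee : b :: p = u.
    apply: (suffix_size_eq Hsuf); rewrite Eu /= ltnS; exact: (size_suffix Hq).
  by move: Hne; rewrite Ee eqxx.
have Hsz : size (behead u) <= n by rewrite size_behead; move: Hs; case: (size u).
by move: (IH _ Hsz Hb); rewrite suffix_behead.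
Qed.

Lemma genS_aux k : (forall k', k = k'.+1 -> Sprop k') -> Sprop k.
Proof.
move=> IHk st; elim: st => [|[[] [b q]] st IH] p D.
- rewrite /= => /eqP -> _; case: D => [|u D].
    move=> <- _ _ _; exists [::]; first by rewrite gen_nil inE.
    by move=> z; rewrite /= inE suffixs0 orbF.
  by move=> _ _ _ /(_ u (mem_head _ _)).
- move=> VV; move: (VV) => /and4P [/eqP Eq Ab N V]; subst q.
  move=> U Sz Red Cl Rg.
  case: (boolP ((b :: p) \in D)) => Hv.
  + clear IH; case: k IHk Sz => [|k] IHk Sz.
      by case: D U Sz Red Cl Rg Hv.
    set D' := [seq u <- D | u != b :: p].
    have SzD' : size D' = k.
      have := count_predC (pred1 (b :: p)) D; rewrite count_uniq_mem // Hv Sz.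
      by rewrite size_filter => /eqP; rewrite eqSS => /eqP <-.
    have V' := valid_open VV.
    have RedD' : forall u, u \in D' -> reduced u by move=> u; rewrite mem_filter => /andP [_ /Red].
    have ClD' : forall u, u \in D' -> (u \in Av (slots (b :: p) ++ clos b :: st)) || (behead u \in D').
        move=> u; rewrite mem_filter => /andP [nu Hu].
        case/orP: (Cl u Hu) => [|Hb].
          rewrite Av_cons_slot inE (negbTE nu) /= => Ha.
          by rewrite Av_cat Av_cons_clos mem_cat Ha orbT.
        case: (boolP (behead u == b :: p)) => Hbe; last by rewrite mem_filter Hbe Hb orbT.
        case: u nu Hu Hbe {Hb} => [|c u] nu Hu /eqP /= Hbe; first by [].
        subst u; rewrite Av_cat mem_cat Av_slots_mem //.
        by have := Red _ Hu => /andP [].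
    have RgD' : forall u, u \in D' -> has (fun w => suffix w u) (Av (slots (b :: p) ++ clos b :: st)).
        move=> u; rewrite mem_filter => /andP [nu Hu].
        case/hasP: (Rg u Hu) => w; rewrite Av_cons_slot inE => /orP [/eqP -> | Hw] Hs.
          have [c Hc] := suffix_child Hs nu.
          apply/hasP; exists (c :: b :: p) => //.
          rewrite Av_cat mem_cat Av_slots_mem //.
          by have := reduced_suffix (Red _ Hu) Hc => /andP [].
        by apply/hasP; exists w => //; rewrite Av_cat Av_cons_clos mem_cat Hw orbT.
    have [y Hy Hyv] := IHk k erefl _ _ D' V' (filter_uniq _ U) SzD' RedD' ClD' RgD'.
    exists (b :: y).
      by rewrite gen_slot mem_cat; apply/orP; right; apply: map_f.
    move=> z; rewrite vertsFrom_cons step_open // inE Hyv suffix_cons2 mem_filter.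
    case: (boolP (z == b :: p)) => [/eqP -> | nz] /=; first by rewrite Hv !orbT.
    case: (boolP (z == p)) => [/eqP -> | _] /=; first by rewrite suffix_refl.
    by [].
  + have Cl2 : forall u, u \in D -> (u \in Av st) || (behead u \in D).
      move=> u Hu; case/orP: (Cl u Hu) => [|->]; last by rewrite orbT.
      rewrite Av_cons_slot inE => /orP [/eqP E | ->] //.
      by move: Hv; rewrite -E Hu.
    have Rg2 : forall u, u \in D -> has (fun w => suffix w u) (Av st).
      move=> u Hu; case/hasP: (Rg u Hu) => w; rewrite Av_cons_slot inE => /orP [/eqP -> | Hw] Hs.
        by move: (noDesc VV Hv Cl Hu); rewrite Hs.
      by apply/hasP; exists w.
    have [x Hx Hxv] := IH p D V U Sz Red Cl2 Rg2.
    by exists x => //; rewrite gen_slot mem_cat Hx.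
- case: p => [|a' p'] // VV; move: (VV) => /= /and3P [/eqP [Ea] N V]; subst a'.
  move=> U Sz Red Cl Rg.
  have [y Hy Hyv] := IH p' D V U Sz Red Cl Rg.
  exists (linv b :: y); first by rewrite gen_clos; apply: map_f.
  move=> z; rewrite vertsFrom_cons step_clos // inE Hyv suffix_cons2.
  by rewrite orbA.
Qed.

Lemma genS k : Sprop k.
Proof.
elim: k => [|k IH]; apply: genS_aux => // k' [<-] //.
Qed.

End Stack.

Section Glue.
Variable r : nat.
Local Notation L := (letter r).
Local Notation W := (word r).

Definition st0 : seq (item r) := slots [::].

Lemma valid_st0 : valid [::] st0.
Proof.
rewrite /st0 /slots -[X in valid _ X]cats0; apply: valid_slots_cat => //.
- by apply: filter_uniq; apply: enum_uniq.
- by apply: filter_all.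
Qed.

Lemma nslots_st0 : nslots st0 = (2 * r)%N.
Proof.
rewrite /st0 nslots_slots /slots size_map size_filter.
rewrite (eq_count (a2 := predT)) // count_predT -cardE.
exact: card_letter.
Qed.

Lemma ncl_st0 : ncl st0 = 0%N.
Proof. exact: ncl_slots. Qed.

Lemma gen_uniq_aux k : (forall k', k = k'.+1 -> forall (st : seq (item r)) p, valid p st -> uniq (gen k' st)) ->
  forall (st : seq (item r)) p, valid p st -> uniq (gen k st).
Proof.
move=> IHk st; elim: st => [|[[] [b q]] st IH] p.
- by rewrite gen_nil; case: k {IHk}.
- move=> VV; move: (VV) => /and4P [/eqP Eq Ab _ V]; subst q.
  rewrite gen_slot; have U1 := IH _ V; clear IH.
  move: U1; case: k IHk => [|k] IHk U1; first by rewrite cats0.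
  rewrite cat_uniq U1 map_inj_uniq; last by move=> ? ? [].
  rewrite (IHk k erefl _ _ (valid_open VV)) andbT andTb.
  apply/hasP => -[x /mapP [y Hy ->] Hx].
  have := slot_notin VV Hx.
  have [_ _ _ P _] := genC (valid_open VV) Hy.
  by rewrite vertsFrom_cons step_open // inE P ?orbT // suffix_refl.
- case: p => [|a p] // /= /and3P [_ _ V]; rewrite gen_clos map_inj_uniq; [exact: IH V | by move=> ? ? []].
Qed.

Lemma gen_uniq k (st : seq (item r)) p : valid p st -> uniq (gen k st).
Proof.
elim: k st p => [|k IH]; apply: gen_uniq_aux => // k' [<-] //.
Qed.


Lemma nil_in_verts (w : W) : [::] \in verts w.
Proof. rewrite vertsE; exact: mem_vertsFrom_head. Qed.

Lemma gen0_props k (x : W) : x \in gen k st0 ->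
  [/\ red x = [::], size x = (2 * k)%N & size (undup (verts x)) = k.+1].
Proof.
move=> Hx; have [E1 E2 _ _ E5] := genC valid_st0 Hx.
by split => //; [rewrite E2 ncl_st0 addn0 | rewrite vertsE E5].
Qed.

Lemma reach (w : W) : red w = [::] ->
  exists2 x, x \in gen (size (undup (verts w))).-1 st0 & sameM x w.
Proof.
move=> Ew.
set S := undup (verts w).
set D := [seq u <- S | u != [::]].
have HS : [::] \in S by rewrite mem_undup nil_in_verts.
have SzD : size D = (size S).-1.
  rewrite /D size_filter; have := count_predC (pred1 [::]) S.
  rewrite count_uniq_mem ?undup_uniq // HS => <-; by rewrite add1n.
have Red : forall u, u \in D -> reduced u.
  move=> u; rewrite mem_filter mem_undup vertsE => /andP [_ Hu]; exact: vertsFrom_reduced Hu.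
have Cl : forall u, u \in D -> (u \in Av st0) || (behead u \in D).
  move=> u; rewrite mem_filter mem_undup => /andP [nu Hu].
  have Hb : behead u \in verts w by rewrite vertsE; apply: verts_closed; rewrite -vertsE.
  case: (boolP (behead u == [::])) => Hbe.
    case: u nu Hu Hb Hbe => [|c u] // _ _ _ /= /eqP ->.
    by rewrite /st0 Av_slots_mem.
  by rewrite mem_filter Hbe mem_undup Hb orbT.
have Rg : forall u, u \in D -> has (fun w => suffix w u) (Av st0).
  move=> u; rewrite mem_filter => /andP [nu _]; case/lastP: u nu => [|u c] // _.
  apply/hasP; exists [:: c]; first by rewrite /st0 Av_slots_mem.
  by rewrite -cats1 suffix_suffix.
have [x Hx Hxv] := genS valid_st0 (filter_uniq _ (undup_uniq _)) SzD Red Cl Rg.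
exists x => //.
have [E1 _ _ _ _] := genC valid_st0 Hx.
apply: sameMI; first by rewrite Ew.
move=> z; rewrite !vertsE Hxv suffixs0 mem_filter mem_undup -vertsE.
by case: (boolP (z == [::])) => [/eqP -> | _] /=; rewrite ?nil_in_verts.
Qed.

Lemma elen_red (w : W) : red w = [::] -> elen w = (2 * (size (undup (verts w))).-1)%N.
Proof.
move=> Ew; have [x Hx Sx] := reach Ew.
move: Hx; set k := _.-1 => Hx.
have [Erx Hsx Hcx] := gen0_props Hx.
have [_ Ev] := sameME Sx.
rewrite /elen; case: ex_minnP => n Hn Hmin.
apply/eqP; rewrite eqn_leq; apply/andP; split.
  apply: Hmin; apply/existsP; exists (@Tuple (2 * k) L x (introT eqP Hsx)) => //.
move/existsP: Hn => [t Ht]; have [Er Ev2] := sameME Ht.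
have := verts_len (tval t); rewrite -vertsE Er Ew size_tuple.
rewrite (size_undup_eq Ev2) -(size_undup_eq Ev) Hcx /=; lia.
Qed.

Lemma classes_sub (l : seq W) : {subset classes l <= l}.
Proof.
elim: l => //= w l IH u; case: ifP => _; first by move/IH; rewrite inE orbC => ->.
by rewrite !inE => /orP [-> // | /IH ->]; rewrite orbT.
Qed.

Lemma classes_uniq (l : seq W) : uniq (classes l).
Proof.
elim: l => //= w l IH; case: ifP => // Hh /=; rewrite IH andbT.
by apply/negP => Hw; move/negbT: Hh; case/hasP; exists w => //; apply: sameM_refl.
Qed.

Lemma classes_pw (l : seq W) : {in classes l &, forall a b, sameM a b -> a = b}.
Proof.
elim: l => //= w l IH; case: ifP => // Hh a b; rewrite !inE.
have F : forall c, c \in classes l -> sameM w c -> False.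
  by move=> c Hc Hs; move/negbT: Hh; case/hasP; exists c.
case/orP => [/eqP -> | Ha]; case/orP => [/eqP -> | Hb] // Hs.
- by case: (F b Hb Hs).
- by case: (F a Ha); rewrite sameM_sym.
- exact: IH.
Qed.

Lemma classes_cover (l : seq W) u : u \in l -> exists2 c, c \in classes l & sameM u c.
Proof.
elim: l => //= w l IH; rewrite inE => /orP [/eqP -> | Hu].
  case: ifP => [/hasP [c Hc Hs] | _]; first by exists c.
  by exists w; [rewrite inE eqxx | apply: sameM_refl].
have [c Hc Hs] := IH Hu; case: ifP => _; first by exists c.
by exists c => //; rewrite inE Hc orbT.
Qed.

Lemma size_le_class (A B : seq W) : uniq A -> {in A &, forall a b, sameM a b -> a = b} ->
  (forall a, a \in A -> exists2 b, b \in B & sameM a b) -> size A <= size B.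
Proof.
move=> UA PA CA.
pose f a := nth a B (find (sameM a) B).
have Hf : forall a, a \in A -> f a \in B /\ sameM a (f a).
  move=> a Ha; have [b Hb Hs] := CA a Ha.
  have Hh : has (sameM a) B by apply/hasP; exists b.
  by split; [apply: mem_nth; rewrite -has_find | apply: nth_find].
rewrite -(size_map f); apply: uniq_leq_size.
  rewrite map_inj_in_uniq // => a1 a2 H1 H2 E.
  have [_ S1] := Hf a1 H1; have [_ S2] := Hf a2 H2.
  apply: PA => //; apply: sameM_trans S1 _; rewrite E sameM_sym //.
by move=> b /mapP [a Ha ->]; have [] := Hf a Ha.
Qed.

Lemma size_eq_class (A B : seq W) : uniq A -> uniq B ->
  {in A &, forall a b, sameM a b -> a = b} -> {in B &, forall a b, sameM a b -> a = b} ->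
  (forall a, a \in A -> exists2 b, b \in B & sameM a b) ->
  (forall b, b \in B -> exists2 a, a \in A & sameM b a) -> size A = size B.
Proof.
move=> UA UB PA PB CA CB; apply/eqP; rewrite eqn_leq.
by rewrite (size_le_class UA PA CA) (size_le_class UB PB CB).
Qed.

Lemma SE_odd k : SE r (2 * k).+1 = 0%N.
Proof.
rewrite /SE; case E : (enum _) => [|t l] //=.
have : t \in enum [pred t : (2 * k).+1.-tuple L | idemw (tval t) && (elen (tval t) == (2 * k).+1)].
  by rewrite E mem_head.
rewrite mem_enum /= => /andP [Hi He].
move: He; rewrite idemwE in Hi; rewrite (elen_red (eqP Hi)) => /eqP; lia.
Qed.

Lemma SE_even k : SE r (2 * k) = fc (2 * r - 1) k (2 * r).
Proof.
have -> : fc (2 * r - 1) k (2 * r) = size (gen k st0) by rewrite size_gen nslots_st0.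
rewrite /SE.
set l := [seq tval t | t <- _].
have Hl : forall u, u \in l -> red u = [::] /\ elen u = (2 * k)%N.
  move=> u /mapP [t]; rewrite mem_enum /= => /andP [Hi /eqP He] ->.
  by split => //; apply/eqP; rewrite -idemwE.
apply: size_eq_class.
- exact: classes_uniq.
- exact: gen_uniq valid_st0.
- exact: classes_pw.
- move=> a b Ha Hb /sameME [_ Ev].
  apply: (genI valid_st0 Ha Hb) => z; rewrite -!vertsE; exact: Ev.
- move=> a Ha; have [Er Ee] := Hl a (classes_sub Ha).
  have [x Hx Sx] := reach Er.
  exists x; last by rewrite sameM_sym.
  suff -> : k = (size (undup (verts a))).-1 by [].
  move: Ee; rewrite (elen_red Er); lia.
- move=> b Hb; have [Erb Hsb Hcb] := gen0_props Hb.
  have Hbl : b \in l.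
    apply/mapP; exists (@Tuple (2 * k) L b (introT eqP Hsb)) => //.
    rewrite mem_enum; apply/andP; split; [by rewrite /= idemwE Erb | by rewrite /= (elen_red Erb) Hcb].
  exact: classes_cover Hbl.
Qed.

End Glue.

Lemma fc_k0 m s : fc m 0 s = 1%N.
Proof. by elim: s => [|s IH]; rewrite ?fc0 // fcS IH. Qed.

Lemma fc_id m k s : (0 < m)%N -> (fc m k s * (s + m * k) = s * 'C(s + m * k, k))%N.
Proof.
case: m => [|m] // _; elim: k s => [|k IHk] s.
  by rewrite fc_k0 muln0 addn0 bin0 mul1n muln1.
elim: s => [|s IHs]; first by rewrite fc0 mul0n.
rewrite fcS.
set n := (s + m.+1 * k.+1)%N.
have En : (s.+1 + m.+1 * k.+1 = n.+1)%N by rewrite /n; lia.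
have E2 : (s + m.+1 + m.+1 * k = n)%N by rewrite /n; lia.
have H2 := IHk (s + m.+1)%N; rewrite E2 in H2.
rewrite En binS.
have H1 := mul_bin_left n k.
have n0 : (0 < n)%N by rewrite /n; lia.
apply/eqP; rewrite -(eqn_pmul2l n0); apply/eqP.
move: IHs H2 H1; set F1 := fc m.+1 k.+1 s; set F2 := fc m.+1 k (s + m.+1).
set A := 'C(n, k); set B := 'C(n, k.+1) => IHs H2 H1.
have Hnk : (n - k = s + m * k.+1 + 1)%N by rewrite /n; lia.
rewrite Hnk in H1.
have Hn : n = (s + m.+1 * k.+1)%N by [].
clearbody F1 F2 A B n.
subst n.
nia.
Qed.

Lemma bin_incr M i : (2 * i < M)%N -> ('C(M, i) <= 'C(M, i.+1))%N.
Proof.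
move=> H; have E := mul_bin_left M i.
have : (i.+1 * 'C(M, i) <= i.+1 * 'C(M, i.+1))%N.
  by rewrite E leq_mul2r; apply/orP; right; lia.
by rewrite leq_mul2l.
Qed.

Lemma up_chain (t : nat -> nat) j : (forall i, (i < j)%N -> (t i <= t i.+1)%N) ->
  forall i, (i <= j)%N -> (t i <= t j)%N.
Proof.
elim: j => [|j IH] H i Hi; first by move: Hi; rewrite leqn0 => /eqP ->.
case: (ltngtP i j.+1) Hi => // [Hlt | ->] _; last by [].
apply: leq_trans (IH _ i _) (H j _) => //; move=> i' Hi'; apply: H; lia.
Qed.

Lemma down_chain (t : nat -> nat) j n : (forall i, (j <= i)%N -> (i < n)%N -> (t i.+1 <= t i)%N) ->
  forall i, (j <= i)%N -> (i <= n)%N -> (t i <= t j)%N.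
Proof.
move=> H; elim=> [|i IH] Hj Hn; first by move: Hj; rewrite leqn0 => /eqP ->.
case: (ltngtP j i.+1) Hj => // [Hlt | <-] _; last by [].
apply: leq_trans (H i _ _) (IH _ _); lia.
Qed.

Section Central.
Variables m j : nat.
Hypothesis m2 : (2 <= m)%N.
Let n := (m * j)%N.
Let t i := ('C(n, i) * (m - 1) ^ (n - i))%N.

Lemma t_step i : (i < n)%N -> (t i.+1 * (i.+1 * (m - 1)) = t i * (n - i))%N.
Proof.
move=> Hi; have E := mul_bin_left n i.
have Ep : ((m - 1) ^ (n - i) = (m - 1) ^ (n - i.+1) * (m - 1))%N.
  by rewrite -expnSr; congr expn; lia.
rewrite /t Ep.
move: E; set X := ((m - 1) ^ (n - i.+1))%N; set C1 := 'C(n, i.+1); set C0 := 'C(n, i).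
set d := (n - i)%N => E.
transitivity ((i.+1 * C1) * (X * (m - 1)))%N; first by ring.
by rewrite E; ring.
Qed.

Lemma t_mode i : (i <= n)%N -> (t i <= t j)%N.
Proof.
move=> Hin; case: (leqP i j) => Hij.
  apply: up_chain Hij => i' Hi'.
  have Hs := t_step (i := i'); have Hi'n : (i' < n)%N by rewrite /n; nia.
  have : (t i' * (i'.+1 * (m - 1)) <= t i'.+1 * (i'.+1 * (m - 1)))%N.
    rewrite (Hs Hi'n) leq_mul2l; apply/orP; right; rewrite /n; nia.
  by rewrite leq_mul2r; case/orP => // /eqP; nia.
apply: (@down_chain t j n) => //; last by apply: ltnW.
move=> i' Hji Hi'n.
have Hs := t_step Hi'n.
have : (t i'.+1 * (i'.+1 * (m - 1)) <= t i' * (i'.+1 * (m - 1)))%N.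
  rewrite Hs leq_mul2l; apply/orP; right; rewrite /n; nia.
by rewrite leq_mul2r; case/orP => // /eqP; nia.
Qed.

Lemma sum_t : (m ^ n = \sum_(i < n.+1) t i)%N.
Proof.
have -> : m = ((m - 1) + 1)%N by lia.
by rewrite expnDn; apply: eq_bigr => i _; rewrite exp1n muln1 /t.
Qed.

Lemma tj_eq : t j = ('C(m * j, j) * (m - 1) ^ ((m - 1) * j))%N.
Proof. by rewrite /t /n mulnBl mul1n. Qed.

Lemma central_ub : ('C(m * j, j) * (m - 1) ^ ((m - 1) * j) <= m ^ (m * j))%N.
Proof.
rewrite -tj_eq -/n sum_t.
have Hj : (j < n.+1)%N by rewrite /n ltnS; nia.
by rewrite (bigD1 (Ordinal Hj)) //= leq_addr.
Qed.

Lemma central_lb : (m ^ (m * j) <= (m * j).+1 * ('C(m * j, j) * (m - 1) ^ ((m - 1) * j)))%N.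
Proof.
rewrite -tj_eq -/n sum_t.
have H : (\sum_(i < n.+1) t i <= \sum_(i < n.+1) t j)%N.
  by apply: leq_sum => i _; apply: t_mode; rewrite -ltnS.
apply: leq_trans H _; by rewrite sum_nat_const card_ord.
Qed.

End Central.

Lemma fc_ub m k : (2 <= m)%N ->
  (fc m k m.+1 * (m - 1) ^ ((m - 1) * k.+2) <= m ^ (m * k.+2))%N.
Proof.
move=> m2.
have H1 : (fc m k m.+1 <= 'C(m.+1 + m * k, k))%N.
  have E := fc_id k m.+1 (ltnW m2).
  have : (fc m k m.+1 * (m.+1 + m * k) <= 'C(m.+1 + m * k, k) * (m.+1 + m * k))%N.
    by rewrite E mulnC leq_mul2l leq_addr orbT.
  by rewrite leq_mul2r; case/orP => // /eqP; lia.
have H2 : ('C(m.+1 + m * k, k) <= 'C(m * k.+2, k))%N by apply: leq_bin2l; nia.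
have H3 : ('C(m * k.+2, k) <= 'C(m * k.+2, k.+2))%N.
  apply: leq_trans (bin_incr _) (bin_incr _); nia.
apply: leq_trans (central_ub k.+2 m2).
by rewrite leq_mul2r; apply/orP; right; apply: leq_trans H1 (leq_trans H2 H3).
Qed.

Lemma fc_lb m k : (2 <= m)%N ->
  (m ^ (m * k) <= (m * k).+1 * ((m.+1 + m * k) * fc m k m.+1 * (m - 1) ^ ((m - 1) * k)))%N.
Proof.
move=> m2; apply: leq_trans (central_lb k m2) _.
rewrite leq_mul2l; apply/orP; right; rewrite leq_mul2r; apply/orP; right.
have E := fc_id k m.+1 (ltnW m2).
rewrite [(_ + _) * _]mulnC E.
apply: (leq_trans _ (leq_pmull _ (ltn0Sn m))); apply: leq_bin2l; apply: leq_addl.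
Qed.

Import Order.TTheory GRing.Theory Num.Theory numFieldNormedType.Exports.
Local Open Scope classical_set_scope.
Local Open Scope ring_scope.

Section Anal.
Variable R : realType.

Lemma bern2 (y : R) k : 0 <= y ->
  1 + k%:R * y + (k%:R * (k%:R - 1) / 2) * y ^+ 2 <= (1 + y) ^+ k.
Proof.
move=> y0; elim: k => [|k IH]; first by rewrite !mul0r !addr0 expr0.
have hk : 0 <= k%:R * (k%:R - 1) :> R.
  case: k {IH} => [|k]; first by rewrite mul0r.
  by rewrite -natr1 addrK mulr_ge0.
have hk0 : 0 <= k%:R :> R by [].
rewrite [in X in _ <= X]exprS -natr1.
set L := 1 + k%:R * y + _ in IH.
have H1 : (1 + y) * L <= (1 + y) * (1 + y) ^+ k by apply: ler_wpM2l => //; rewrite addr_ge0.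
apply: le_trans H1.
rewrite -subr_ge0.
have -> : (1 + y) * L - (1 + (k%:R + 1) * y + (k%:R + 1) * (k%:R + 1 - 1) / 2 * y ^+ 2)
   = (k%:R * (k%:R - 1) / 2) * y ^+ 3 by rewrite /L; field.
by rewrite mulr_ge0 // ?exprn_ge0 // divr_ge0.
Qed.


Lemma big_pow (B e : R) : 0 <= B -> 0 < e ->
  exists N, forall k, (N <= k)%N -> B * k%:R ^+ 2 <= (1 + e) ^+ (2 * k).
Proof.
move=> B0 e0.
set M := 4 * B / e ^+ 4 + 1.
exists (Num.truncn M).+2 => k Hk.
have HM : M < ((Num.truncn M).+1)%:R := truncnS_gt M.
set K := k%:R.
have HK : M <= K - 1.
  apply: (le_trans (ltW HM)); rewrite lerBrDr natr1 ler_nat; lia.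
have e4 : 0 < e ^+ 4 by rewrite exprn_gt0.
have M1 : 4 * B / e ^+ 4 <= K - 1 - 1 by move: HK; rewrite /M; lra.
have Hb := bern2 k (ltW e0).
have K0 : 0 <= K by [].
have K1 : 1 <= K - 1 by apply: le_trans HK; rewrite /M lerDr divr_ge0 ?mulr_ge0 // ltW.
have Hp : K * (K - 1) / 2 * e ^+ 2 <= (1 + e) ^+ k.
  apply: le_trans Hb; have : 0 <= K * e by rewrite mulr_ge0 // ltW.
  rewrite /K; lra.
have Hp0 : 0 <= K * (K - 1) / 2 * e ^+ 2.
  by rewrite mulr_ge0 ?divr_ge0 ?mulr_ge0 ?exprn_ge0 // ?ltW //; lra.
rewrite mulnC exprM.
have Hsq : (K * (K - 1) / 2 * e ^+ 2) ^+ 2 <= ((1 + e) ^+ k) ^+ 2.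
  by rewrite ler_pXn2r // nnegrE //; apply: le_trans Hp.
apply: le_trans Hsq.
have -> : (K * (K - 1) / 2 * e ^+ 2) ^+ 2 = K ^+ 2 * ((K - 1) ^+ 2 * e ^+ 4 / 4) by field.
rewrite mulrC; apply: ler_wpM2l; first by rewrite exprn_ge0.
have HB : B = 4 * B / e ^+ 4 * e ^+ 4 / 4 by field; rewrite gt_eqF.
rewrite {1}HB ler_pM2r ?invr_gt0 // ler_pM2r //.
apply: le_trans (_ : K - 1 <= _); first by lra.
by rewrite expr2 ler_peMr //; lra.
Qed.


Lemma powR_pow_inv (b : R) k : 0 <= b -> (0 < k)%N -> (b ^+ (2 * k)) `^ ((2 * k)%:R^-1) = b.
Proof.
move=> b0 k0; rewrite -powR_mulrn // -powRrM mulfV ?powRr1 //.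
by rewrite pnatr_eq0 muln_eq0 negb_or /=; lia.
Qed.

Lemma root1 (q : nat -> R) (B : R) : 0 <= B ->
  (forall k, (1 <= k)%N -> [/\ 0 < q k, q k <= B * k%:R ^+ 2 & (q k)^-1 <= B * k%:R ^+ 2]) ->
  (fun k => q k `^ ((2 * k)%:R^-1)) @ \oo --> (1 : R).
Proof.
move=> B0 Hq; apply/cvgrPdist_le => e e0.
have [N HN] := big_pow B0 e0.
exists (maxn N 1) => // k /= Hk.
have [q0 Hu Hl] := Hq k (leq_trans (leq_maxr N 1) Hk).
have HNk := HN k (leq_trans (leq_maxl _ _) Hk).
have k0 : (0 < k)%N by move: Hk; rewrite geq_max => /andP [_ ->].
have e1 : 0 <= 1 + e by lra.
set x := q k `^ _.
have Hx1 : x <= 1 + e.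
  rewrite -(powR_pow_inv e1 k0); apply: ge0_ler_powR; rewrite ?nnegrE ?invr_ge0 ?exprn_ge0 //.
    exact: ltW.
  exact: le_trans Hu HNk.
have ie0 : 0 < (1 + e)^-1 by rewrite invr_gt0; lra.
have Hx2 : (1 + e)^-1 <= x.
  rewrite -(powR_pow_inv (ltW ie0) k0); apply: ge0_ler_powR.
  - by rewrite invr_ge0.
  - by rewrite nnegrE exprn_ge0 // ltW.
  - by rewrite nnegrE ltW.
  rewrite exprVn -(invrK (q k)) lef_pV2 ?posrE ?exprn_gt0 ?invr_gt0 //; last by lra.
  exact: le_trans Hl HNk.
have Hv : (1 + e)^-1 * (1 + e) = 1 by rewrite mulVf //; apply/eqP; lra.
have H3 : 1 - e <= (1 + e)^-1 by nra.
rewrite ler_norml; apply/andP; split; lra.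
Qed.

End Anal.

Section Main.
Variable R : realType.

Definition Tr (r : nat) : R :=
  ((2 * r - 1)%N%:R / (2 * r - 2)%N%:R) ^+ (r - 1) * Num.sqrt (2 * r - 1)%N%:R.

Definition cc (m : nat) : R := m%:R ^+ m / (m - 1)%N%:R ^+ (m - 1).

Lemma cc_gt0 m : (2 <= m)%N -> 0 < cc m.
Proof.
move=> m2; rewrite /cc divr_gt0 // exprn_gt0 // ltr0n; lia.
Qed.

Lemma Tr_sqrt r : (2 <= r)%N -> Tr r = Num.sqrt (cc (2 * r - 1)).
Proof.
move=> r2; set m := (2 * r - 1)%N.
have Em : (2 * r - 2 = m - 1)%N by rewrite /m; lia.
have Er : (m - 1 = 2 * (r - 1))%N by rewrite /m; lia.
have m1 : (0 < (m - 1)%N%:R :> R) by rewrite ltr0n; lia.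
have T0 : 0 <= Tr r.
  rewrite /Tr mulr_ge0 ?sqrtr_ge0 // exprn_ge0 // divr_ge0 //.
rewrite -[LHS]ger0_norm // -sqrtr_sqr; congr Num.sqrt.
rewrite /Tr -/m Em exprMn sqr_sqrtr // -exprM mulnC -Er /cc.
move: m1; have [n ->] : exists n, m = n.+1 by exists (m - 1)%N; rewrite /m; lia.
rewrite subn1 /= => m1.
rewrite expr_div_n [_ ^+ n.+1]exprS; field.
by rewrite expf_neq0 // gt_eqF.
Qed.


Lemma a_ub m k : (2 <= m)%N -> (fc m k m.+1)%:R <= cc m ^+ k.+2 :> R.
Proof.
move=> m2; have H := fc_ub k m2.
have D0 : 0 < (m - 1)%N%:R ^+ ((m - 1) * k.+2) :> R by rewrite exprn_gt0 // ltr0n; lia.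
rewrite /cc expr_div_n -!exprM ler_pdivlMr //.
by rewrite -!natrX -natrM ler_nat.
Qed.

Lemma a_lb m k : (2 <= m)%N ->
  cc m ^+ k <= ((m * k).+1 * (m.+1 + m * k))%N%:R * (fc m k m.+1)%:R :> R.
Proof.
move=> m2; have H := fc_lb k m2.
have D0 : 0 < (m - 1)%N%:R ^+ ((m - 1) * k) :> R by rewrite exprn_gt0 // ltr0n; lia.
rewrite /cc expr_div_n -!exprM ler_pdivrMr //.
rewrite -!natrX -!natrM ler_nat; apply: leq_trans H _.
by rewrite !mulnA.
Qed.

Lemma SE_fc r k : (1 <= r)%N -> SE r (2 * k) = fc (2 * r - 1) k (2 * r - 1).+1.
Proof.
by move=> r1; rewrite SE_even; congr fc; lia.
Qed.

Lemma main_seq r : (2 <= r)%N ->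
  (fun k => ((SE r (2 * k))%:R : R) `^ (((2 * k)%N%:R)^-1)) @ \oo --> Tr r.
Proof.
move=> r2; set m := (2 * r - 1)%N.
have m2 : (2 <= m)%N by rewrite /m; lia.
set c := cc m; have c0 : 0 < c := cc_gt0 m2.
pose q k := (fc m k m.+1)%:R / c ^+ k.
pose B := c ^+ 2 + ((2 * m + 1)%N%:R) ^+ 2.
have B0 : 0 <= B by rewrite addr_ge0 // exprn_ge0 // ltW.
have ck0 : forall k, 0 < c ^+ k by move=> k; rewrite exprn_gt0.
have Hq : forall k, (1 <= k)%N -> [/\ 0 < q k, q k <= B * k%:R ^+ 2 & (q k)^-1 <= B * k%:R ^+ 2].
  move=> k k1.
  have K1 : 1 <= k%:R ^+ 2 :> R by rewrite exprn_ege1 // ler1n.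
  have Hu := a_ub k m2; have Hl := a_lb k m2.
  set a := (fc m k m.+1)%:R in Hu Hl *.
  set P := ((m * k).+1 * (m.+1 + m * k))%N%:R in Hl.
  have P0 : 0 < P by rewrite ltr0n muln_gt0.
  have a0 : 0 < a.
    have : 0 <= a by rewrite /a ler0n.
    rewrite le0r => /orP [/eqP a0 | //].
    by move: Hl; rewrite a0 mulr0 leNgt ck0.
  have HP : P <= ((2 * m + 1)%N%:R) ^+ 2 * k%:R ^+ 2.
    by rewrite -exprMn -natrM -natrX ler_nat; nia.
  split.
  - by rewrite divr_gt0.
  - have Hq1 : q k <= c ^+ 2.
      rewrite ler_pdivrMr // -exprD; apply: (le_trans Hu).
      by rewrite le_eqVlt; apply/orP; left; apply/eqP; congr (_ ^+ _); lia.
    apply: le_trans Hq1 _; apply: (@le_trans _ _ B).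
      by rewrite lerDl exprn_ge0.
    by rewrite ler_peMr.
  - rewrite invf_div ler_pdivrMr //; apply: le_trans Hl _; rewrite ler_pM2r //.
    apply: le_trans HP _; have kk : 0 < k%:R ^+ 2 :> R by rewrite exprn_gt0 // ltr0n.
    by rewrite ler_pM2r // lerDr exprn_ge0 // ltW.
have Hr := root1 B0 Hq.
have Hm : (fun k => Tr r * q k `^ ((2 * k)%:R^-1)) @ \oo --> Tr r * 1 by apply: cvgM; [exact: cvg_cst | exact: Hr].
rewrite mulr1 in Hm.
apply: cvg_trans Hm; apply: near_eq_cvg; exists 1%N => // k /= k1.
rewrite SE_fc; last by lia.
rewrite -/m.
have -> : (fc m k m.+1)%:R = c ^+ k * q k by rewrite /q mulrC divfK // gt_eqF.
rewrite powRM ?exprn_ge0 ?ltW //; last first.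
  by case: (Hq k k1).
congr (_ * _).
rewrite Tr_sqrt // -/m -/c.
have -> : c ^+ k = (Num.sqrt c) ^+ (2 * k) by rewrite exprM sqr_sqrtr // ltW.
by rewrite powR_pow_inv ?sqrtr_ge0.
Qed.

End Main.

Section Limsup.
Variable R : realType.

Lemma esups_le (u w : (\bar R)^nat) : (forall k, (u k <= w k)%E) -> forall n, (esups u n <= esups w n)%E.
Proof.
move=> H n; apply: ge_ereal_sup => x [k /= Hk <-]; apply: le_trans (H k) _.
by apply: ereal_sup_ubound; exists k.
Qed.

Lemma esups_ge (u : (\bar R)^nat) n k : (n <= k)%N -> (u k <= esups u n)%E.
Proof. by move=> H; apply: ereal_sup_ubound; exists k. Qed.

Lemma cvg_half (g : nat -> R) (l : R) : g @ \oo --> l -> (fun K => g K./2) @ \oo --> l.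
Proof.
move=> Hg; apply/cvgrPdist_le => e e0.
have := (cvgrPdist_le _ _).1 Hg e e0.
case=> N _ HN; exists (N.*2) => // K /= HK.
apply: HN => /=; have E := odd_double_half K; have o1 : (odd K <= 1)%N by case: odd.
move: HK E; rewrite -!muln2; lia.
Qed.

Lemma main_limsup r : (2 <= r)%N ->
  limn_esup (fun K : nat => (((SE r K)%:R : R) `^ (K%:R^-1))%:E) = (@Tr R r)%:E.
Proof.
move=> r2.
set u := fun K : nat => _.
set g := fun k : nat => ((SE r (2 * k))%:R : R) `^ (((2 * k)%N%:R)^-1).
have Hg : g @ \oo --> @Tr R r := main_seq (R := R) r2.
have Hu2 : forall k, u (2 * k)%N = (g k)%:E by [].
have Hu1 : forall k, u (2 * k).+1 = 0%E.
  by move=> k; rewrite /u SE_odd powR0 // invr_eq0 pnatr_eq0.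
set w := fun K : nat => (g K./2)%:E.
have Huw : forall K, (u K <= w K)%E.
  move=> K; rewrite /w; have E := odd_double_half K.
  move: E; set h := K./2; case: (odd K) => /= E; rewrite -E -muln2 mulnC.
    by rewrite add1n Hu1 lee_fin powR_ge0.
  by rewrite add0n Hu2.
have Hw : w @ \oo --> (@Tr R r)%:E.
  apply: cvg_EFin; first by exists 0%N.
  exact: cvg_half.
apply/eqP; rewrite eq_le; apply/andP; split.
- rewrite limn_esup_lim -(cvg_limn_einf_sup Hw).2 limn_esup_lim.
  apply: lee_lim; [exact: is_cvg_esups | exact: is_cvg_esups | ].
  by exists 0%N => // n _; apply: esups_le.
- have Hge : (fun k => (g k)%:E) @ \oo --> (@Tr R r)%:E.
    by apply: cvg_EFin; [exists 0%N | exact: Hg].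
  rewrite -(cvg_lim _ Hge) // limn_esup_lim.
  apply: lee_lim; [by apply/cvg_ex; eexists; exact: Hge | exact: is_cvg_esups | ].
  exists 0%N => // n _ /=; rewrite -Hu2; apply: esups_ge; lia.
Qed.


Lemma X_bounds (n : nat) : (0 < n)%N ->
  expR 1 * n%:R / (n%:R + 1) <= ((n%:R + 1) / n%:R) ^+ n :> R /\
  ((n%:R + 1) / n%:R) ^+ n <= expR 1 :> R.
Proof.
move=> n0; set N : R := n%:R.
have N0 : 0 < N by rewrite ltr0n.
have M0 : 0 < N + 1 by lra.
have Ex : (N + 1) / N = 1 + N^-1 by field; rewrite gt_eqF.
split; last first.
  rewrite Ex; apply: le_trans (_ : expR (N^-1) ^+ n <= _).
    rewrite ler_pXn2r ?nnegrE ?expR_ge0 ?expR_ge1Dx //.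
    by rewrite addr_ge0 // invr_ge0 ltW.
  by rewrite -expRM_natr mulVf // gt_eqF.
have H1 : N / (N + 1) <= expR (- (N + 1)^-1).
  apply: le_trans (expR_ge1Dx _); rewrite le_eqVlt; apply/orP; left; apply/eqP.
  by field; rewrite gt_eqF.
have H2 : expR ((N + 1)^-1) <= (N + 1) / N.
  rewrite -[X in _ <= X]invf_div -[X in X <= _]invrK -expRN lef_pV2 ?posrE ?expR_gt0 ?divr_gt0 //.
have H3 : expR 1 <= ((N + 1) / N) ^+ n.+1.
  apply: le_trans (_ : expR ((N + 1)^-1) ^+ n.+1 <= _).
    by rewrite -expRM_natr -natr1 -/N mulVf // gt_eqF.
  by rewrite ler_pXn2r ?nnegrE ?expR_ge0 ?divr_ge0 // ?ltW.
move: H3; rewrite exprSr.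
have P0 : 0 < (N + 1) / N by rewrite divr_gt0.
rewrite -ler_pdivrMr // invf_div mulrA //.
Qed.


Lemma ratio_lim :
  (fun r : nat => @Tr R r / Num.sqrt (expR 1 * (2 * r - 1)%N%:R)) @ \oo --> (1 : R).
Proof.
apply/cvgrPdist_le => e e0.
set M := Num.truncn (e^-1).
exists (maxn M 2).+1 => // r /= Hr.
have r2 : (2 <= r)%N by lia.
set m := (2 * r - 1)%N.
set n := (m - 1)%N.
have Emn : m = n.+1 by rewrite /n /m; lia.
have n0 : (0 < n)%N by rewrite /n /m; lia.
set N : R := n%:R.
have N0 : 0 < N by rewrite ltr0n.
have [Xl Xu] := X_bounds n0.
set X := ((N + 1) / N) ^+ n in Xl Xu.
have ee : 0 < expR 1 :> R := expR_gt0 1.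
have mR : m%:R = N + 1 :> R by rewrite Emn -natr1.
set t := _ / _.
have t0 : 0 <= t by rewrite divr_ge0 // ?sqrtr_ge0 // /Tr mulr_ge0 ?sqrtr_ge0 // exprn_ge0 // divr_ge0.
have Ht2 : t ^+ 2 = X / expR 1.
  rewrite /t expr_div_n sqr_sqrtr; last by rewrite mulr_ge0 // ltW.
  rewrite Tr_sqrt // -/m sqr_sqrtr; last by apply: ltW; apply: cc_gt0; lia.
  rewrite /cc Emn subn1 /= -natr1 -/N /X expr_div_n exprS.
  field; rewrite ?gt_eqF ?exprn_gt0 //; lra.
have t1 : t ^+ 2 <= 1 by rewrite Ht2 ler_pdivrMr // mul1r.
have t2 : N / (N + 1) <= t ^+ 2.
  by rewrite Ht2 ler_pdivlMr // mulrC mulrA.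
have tle1 : t <= 1 by nra.
have Hm : (M.+1 <= m)%N.
  by rewrite /m; lia.
have HMe : e^-1 < (N + 1).
  apply: lt_le_trans (truncnS_gt _) _; rewrite -mR ler_nat //.
have He : (N + 1)^-1 <= e.
  rewrite -[e]invrK lef_pV2 ?posrE ?invr_gt0 //; [exact: ltW | lra].
have Hfrac : 1 - N / (N + 1) = (N + 1)^-1 by field; rewrite gt_eqF //; lra.
rewrite ler_norml; apply/andP; split; nra.
Qed.

End Limsup.

Theorem mainTheorem6 (R : realType) :
  (forall r : nat, (2 <= r)%N ->
     limn_esup (fun K : nat => (((SE r K)%:R : R) `^ (K%:R^-1))%:E)
       = ((((2 * r - 1)%N%:R / (2 * r - 2)%N%:R) ^+ (r - 1)
            * Num.sqrt (2 * r - 1)%N%:R : R))%:E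
     /\
     (fun k : nat => ((SE r (2 * k))%:R : R) `^ (((2 * k)%N%:R)^-1))
       @ \oo --> (((2 * r - 1)%N%:R / (2 * r - 2)%N%:R) ^+ (r - 1)
                   * Num.sqrt (2 * r - 1)%N%:R : R))
  /\
  (fun r : nat =>
     (((2 * r - 1)%N%:R / (2 * r - 2)%N%:R) ^+ (r - 1)
        * Num.sqrt (2 * r - 1)%N%:R : R)
     / Num.sqrt (expR 1 * (2 * r - 1)%N%:R)) @ \oo --> (1 : R).
Proof.
split.
  move=> r r2; split; [exact: (@main_limsup R r r2) | exact: (@main_seq R r r2)].
exact: (@ratio_lim R).
Qed.
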